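(* Let $\rho$ be a left-c.e. semi-measure and let $\Phi$ be a Turing functional with $\lambda_\Phi=\rho$. Then for every $X\in\mathsf{W2R}\cap\mathrm{dom}(\Phi)$, $\Phi(X)\in\mathsf{W2R}_\rho$.
   Context: $2^{<\omega}$ is the set of finite binary strings, $\preceq$ the prefix order, $\varepsilon$ the empty string, $[\![\sigma]\!]=\{X\in2^\omega:\sigma\preceq X\}$, $[\![S]\!]=\bigcup_{\sigma\in S}[\![\sigma]\!]$; $\lambda$ is the uniform measure. $\mathsf{W2R}$ is the set of weakly 2-random sequences: $X$ such that $X\notin\bigcap_i\mathcal U_i$ for every uniformly effectively open sequence $(\mathcal U_i)$ of subsets of $2^\omega$ with $\lim_i\lambda(\mathcal U_i)=0$. A Turing functional $\Phi$ is a c.e. set of pairs $(\sigma,\tau)$ of strings such that whenever $(\sigma,\tau),(\sigma',\tau')\in\Phi$ and $\sigma\preceq\sigma'$, $\tau,\tau'$ are comparable; $\Phi^X$ is the maximal finite or infinite sequence extending every $\tau$ with $(\sigma,\tau)\in\Phi$ for some $\sigma\preceq X$; $\mathrm{dom}(\Phi)=\{X:\Phi^X\text{ infinite}\}$, $\Phi(X)=\Phi^X$ there, and $\lambda_\Phi(\sigma)=\lambda(\{X:\Phi^X\succeq\sigma\})$. A semi-measure is $\rho:2^{<\omega}\to[0,1]$ with $\rho(\varepsilon)=1$ and $\rho(\sigma)\ge\rho(\sigma0)+\rho(\sigma1)$; left-c.e. means uniformly approximable from below by computable non-decreasing rational sequences. For $E\subseteq2^{<\omega}$, $\rho(E)=\sum_{\sigma\in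 E}\rho(\sigma)$. A generalized $\rho$-Martin-Löf test is a uniformly c.e. sequence $(U_i)$ of subsets of $2^{<\omega}$ with $\lim_i\rho(U_i)=0$; $X\in\mathsf{W2R}_\rho$ iff $X\notin\bigcap_i[\![U_i]\!]$ for every such test. *)

(* Defs.v *)
From HB Require Import structures.
From mathcomp Require Import all_boot all_order all_algebra.
From mathcomp Require Import all_classical all_reals.
From mathcomp Require Import ereal topology normedtype sequences esum.
Set Implicit Arguments. Unset Strict Implicit. Unset Printing Implicit Defensive.
Import Order.TTheory GRing.Theory Num.Theory.
Import numFieldTopology.Exports numFieldNormedType.Exports.
Local Open Scope classical_set_scope.
Local Open Scope ring_scope.

Definition cpair (x y : nat) : nat := ((x + y) * (x + y).+1) %/ 2 + y.

Inductive code : Type :=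
  | CZero
  | CSucc
  | CId
  | CPi1
  | CPi2
  | CPair of code & code
  | CComp of code & code
  | CRec of code & code
  | CMu of code.

Inductive eval : code -> nat -> nat -> Prop :=
  | ev_zero n : eval CZero n 0
  | ev_succ n : eval CSucc n n.+1
  | ev_id n : eval CId n n
  | ev_pi1 a b : eval CPi1 (cpair a b) a
  | ev_pi2 a b : eval CPi2 (cpair a b) b
  | ev_pair f g n a b : eval f n a -> eval g n b -> eval (CPair f g) n (cpair a b)
  | ev_comp f g n m k : eval g n m -> eval f m k -> eval (CComp f g) n k
  | ev_rec0 f g x a : eval f x a -> eval (CRec f g) (cpair x 0) a
  | ev_recS f g x n a b : eval (CRec f g) (cpair x n) a ->
      eval g (cpair x (cpair n a)) b -> eval (CRec f g) (cpair x n.+1) b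
  | ev_mu f x n : eval f (cpair x n) 0 ->
      (forall m, (m < n)%N -> exists k, eval f (cpair x m) k.+1) ->
      eval (CMu f) x n.

Definition ce (T : countType) (A : set T) : Prop :=
  exists c : code, forall x : T, A x <-> exists m, eval c (pickle x) m.

Definition computable (T U : countType) (f : T -> U) : Prop :=
  exists c : code, forall x : T, eval c (pickle x) (pickle (f x)).

Notation str := (seq bool).
Notation cantor := (nat -> bool).

Definition prefixX (s : str) (X : cantor) : Prop :=
  forall i, (i < size s)%N -> X i = nth false s i.

Definition cyl (s : str) : set cantor := [set X | prefixX s X].
Definition cylS (S : set str) : set cantor := [set X | exists2 s, S s & prefixX s X].

(* On Borel (in particular open) sets this is the uniform measure. *)
Definition lambda (R : realType) (A : set cantor) : \bar R :=
  ereal_inf [set (esum S (fun s : str => ((2%:R : R) ^- size s)%:E)) |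
             S in [set S : set str | A `<=` cylS S]].

Definition turing_functional (Phi : set (str * str)) : Prop :=
  ce Phi /\
  forall s t s' t', Phi (s, t) -> Phi (s', t') -> prefix s s' ->
    prefix t t' || prefix t' t.

(* [outpref Phi X nu] : nu is a prefix of Phi^X, i.e. Phi^X extends nu.
   Phi^X is the union of the (pairwise comparable) t with (s,t) in Phi and
   s a prefix of X. *)
Definition outpref (Phi : set (str * str)) (X : cantor) (nu : str) : Prop :=
  nu = [::] \/ exists s t, [/\ Phi (s, t), prefixX s X & prefix nu t].

Definition in_dom (Phi : set (str * str)) (X : cantor) : Prop :=
  forall n, exists nu, size nu = n /\ outpref Phi X nu.

(* [Phi_val Phi X Y] : Phi(X) = Y, i.e. every prefix of Y is a prefix of Phi^X
   (for X in dom(Phi) this determines Y uniquely). *)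
Definition Phi_val (Phi : set (str * str)) (X Y : cantor) : Prop :=
  forall nu, prefixX nu Y -> outpref Phi X nu.

Definition lambda_Phi (R : realType) (Phi : set (str * str)) (s : str) : \bar R :=
  lambda R [set X | outpref Phi X s].

Definition semi_measure (R : realType) (rho : str -> R) : Prop :=
  [/\ forall s, 0 <= rho s <= 1,
      rho [::] = 1 &
      forall s, rho (rcons s false) + rho (rcons s true) <= rho s].

Definition left_ce (R : realType) (rho : str -> R) : Prop :=
  exists q : str * nat -> rat,
    [/\ computable q,
        forall s n, q (s, n) <= q (s, n.+1) &
        forall s, (fun n => (ratr (q (s, n)) : R)) @ \oo --> rho s].

Definition rho_set (R : realType) (rho : str -> R) (E : set str) : \bar R :=
  esum E (fun s => (rho s)%:E).

Definition unif_ce (W : nat -> set str) : Prop :=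
  ce [set p : nat * str | W p.1 p.2].

Definition unif_eff_open (U : nat -> set cantor) : Prop :=
  exists W : nat -> set str, unif_ce W /\ forall i, U i = cylS (W i).

Definition W2R (R : realType) (X : cantor) : Prop :=
  forall U : nat -> set cantor, unif_eff_open U ->
    (fun i => lambda R (U i)) @ \oo --> (0 : \bar R) ->
    ~ (forall i, U i X).

Definition W2R_rho (R : realType) (rho : str -> R) (Y : cantor) : Prop :=
  forall W : nat -> set str, unif_ce W ->
    (fun i => rho_set rho (W i)) @ \oo --> (0 : \bar R) ->
    ~ (forall i, cylS (W i) Y).

(* Main.v *)
Require Import Defs.
From HB Require Import structures.
From mathcomp Require Import all_boot all_order all_algebra.
From mathcomp Require Import all_classical all_reals.
From mathcomp Require Import ereal topology normedtype sequences esum.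

From mathcomp Require Import zify.
Set Implicit Arguments. Unset Strict Implicit. Unset Printing Implicit Defensive.

Lemma tri_step s : (s.+1 * s.+2) %/ 2 = (s * s.+1) %/ 2 + s.+1.
Proof.
have -> : s.+1 * s.+2 = s * s.+1 + s.+1 * 2 by nia.
by rewrite divnDr ?dvdn_mull // mulnK.
Qed.

Lemma cpair_lt a b a' b' : a + b < a' + b' -> cpair a b < cpair a' b'.
Proof.
rewrite /cpair => H.
suff: (a + b) * (a + b).+1 %/ 2 + (a+b) < (a' + b') * (a' + b').+1 %/ 2 by lia.
elim: (a' + b') H => // s IH; rewrite ltnS leq_eqVlt => /orP [/eqP ->|/IH]; rewrite tri_step; lia.
Qed.

Lemma cpair_inj a b a' b' : cpair a b = cpair a' b' -> a = a' /\ b = b'.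
Proof.
move=> E.
have Es : a + b = a' + b'.
  case: (ltngtP (a + b) (a' + b')) => // /cpair_lt; rewrite E ltnn //.
move: E; rewrite /cpair Es => E; lia.
Qed.

Fixpoint unpair (n : nat) : nat * nat :=
  match n with
  | 0 => (0, 0)
  | n'.+1 => let p := unpair n' in
             if p.1 is a'.+1 then (a', p.2.+1) else (p.2.+1, 0)
  end.
Definition u1 n := (unpair n).1.
Definition u2 n := (unpair n).2.

Lemma cpair_unpair n : cpair (u1 n) (u2 n) = n.
Proof.
rewrite /u1 /u2; elim: n => // n IH /=.
case: (unpair n) IH => [[|a] b] /= <-; rewrite /cpair.
  by rewrite !add0n !addn0 tri_step; lia.
by rewrite addSnnS addnS; lia.
Qed.

Lemma u1_cpair a b : u1 (cpair a b) = a.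
Proof. by have /cpair_inj[] := cpair_unpair (cpair a b). Qed.
Lemma u2_cpair a b : u2 (cpair a b) = b.
Proof. by have /cpair_inj[] := cpair_unpair (cpair a b). Qed.

Ltac cpinj := repeat match goal with H : cpair _ _ = cpair _ _ |- _ =>
  let a := fresh in let b := fresh in case: (cpair_inj H) => a b; clear H; subst end.

Ltac useIH IH := match goal with H1: Defs.eval ?f ?x ?a, H2 : Defs.eval ?f ?x ?b |- _ =>
   let E := fresh in have E := IH _ _ _ H1 H2; subst; clear H1 end.

Lemma eval_det c x m m' : Defs.eval c x m -> Defs.eval c x m' -> m = m'.
Proof.
elim: c x m m' => [||||| f IHf g IHg | f IHf g IHg | f IHf g IHg | f IHf] x m m'.
- by move=> H1 H2; inversion H1; inversion H2.
- by move=> H1 H2; inversion H1; inversion H2.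
- by move=> H1 H2; inversion H1; inversion H2; subst.
- move=> H1 H2; inversion H1; subst; inversion H2; subst; cpinj; done.
- move=> H1 H2; inversion H1; subst; inversion H2; subst; cpinj; done.
- move=> H1 H2; inversion H1; subst; inversion H2; subst.
  useIH IHf; useIH IHg; done.
- move=> H1 H2; inversion H1; subst; inversion H2; subst.
  useIH IHg; useIH IHf; done.
- rewrite -(cpair_unpair x); move: (u1 x) (u2 x) => y k.
  elim: k m m' => [|k IH] m m' H1 H2.
  + inversion H1; subst; inversion H2; subst; cpinj; try done.
    useIH IHf; done.
  + inversion H1; subst; inversion H2; subst; cpinj; try done.
    repeat match goal with H : _.+1 = _.+1 |- _ => case: H => H; subst end.
    match goal with H1: Defs.eval (CRec f g) ?x ?a, H2 : Defs.eval (CRec f g) ?x ?b |- _ =>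
      have E := IH _ _ H1 H2; subst end.
    useIH IHg; done.
- move=> H1 H2; inversion H1; subst; inversion H2; subst.
  case: (ltngtP m m') => // Hlt.
  + by case: (H5 _ Hlt) => k Hk; have := IHf _ _ _ H0 Hk.
  + by case: (H3 _ Hlt) => k Hk; have := IHf _ _ _ H4 Hk.
Qed.

Definition comp1 (F : nat -> nat) := exists c, forall x, Defs.eval c x (F x).

Lemma comp_id : comp1 id. Proof. by exists CId => x; constructor. Qed.
Lemma comp_succ : comp1 S. Proof. by exists CSucc => x; constructor. Qed.
Lemma comp_zero : comp1 (fun _ => 0). Proof. by exists CZero => x; constructor. Qed.
Lemma comp_u1 : comp1 u1.
Proof. exists CPi1 => x; rewrite -{1}(cpair_unpair x); constructor. Qed.
Lemma comp_u2 : comp1 u2.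
Proof. exists CPi2 => x; rewrite -{1}(cpair_unpair x); constructor. Qed.
Lemma comp_pair F G : comp1 F -> comp1 G -> comp1 (fun x => cpair (F x) (G x)).
Proof. by move=> [f Hf] [g Hg]; exists (CPair f g) => x; constructor. Qed.
Lemma comp_comp F G : comp1 F -> comp1 G -> comp1 (fun x => F (G x)).
Proof. by move=> [f Hf] [g Hg]; exists (CComp f g) => x; econstructor. Qed.
Lemma comp_ext F G : comp1 F -> (forall x, F x = G x) -> comp1 G.
Proof. by move=> [f Hf] E; exists f => x; rewrite -E. Qed.
Lemma comp_const k : comp1 (fun _ => k).
Proof.
elim: k => [|k [c Hc]]; first exact: comp_zero.
by exists (CComp CSucc c) => x; econstructor; [exact: Hc|constructor].
Qed.

Fixpoint primrec (F G : nat -> nat) x k :=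
  match k with 0 => F x | k'.+1 => G (cpair x (cpair k' (primrec F G x k'))) end.

Lemma comp_rec F G : comp1 F -> comp1 G -> comp1 (fun n => primrec F G (u1 n) (u2 n)).
Proof.
move=> [f Hf] [g Hg]; exists (CRec f g) => n.
rewrite -{1}(cpair_unpair n); move: (u1 n) (u2 n) => x k.
elim: k => [|k IH] /=; first by constructor.
by econstructor; [exact: IH|].
Qed.

Definition comp2 (f : nat -> nat -> nat) := comp1 (fun n => f (u1 n) (u2 n)).

Lemma comp_app2 f A B : comp2 f -> comp1 A -> comp1 B -> comp1 (fun x => f (A x) (B x)).
Proof.
move=> Hf HA HB; apply: (comp_ext (comp_comp Hf (comp_pair HA HB))) => x /=.
by rewrite u1_cpair u2_cpair.
Qed.

Lemma comp_primrec F G A B : comp1 F -> comp1 G -> comp1 A -> comp1 B ->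
  comp1 (fun x => primrec F G (A x) (B x)).
Proof. move=> HF HG; apply: comp_app2; exact: comp_rec. Qed.

Lemma comp_u1c A : comp1 A -> comp1 (fun x => u1 (A x)).
Proof. exact: comp_comp comp_u1. Qed.
Lemma comp_u2c A : comp1 A -> comp1 (fun x => u2 (A x)).
Proof. exact: comp_comp comp_u2. Qed.

Lemma comp_iter N S I : comp1 N -> comp1 S -> comp1 I ->
  comp1 (fun x => iter (N x) S (I x)).
Proof.
move=> HN HS HI.
have H := comp_primrec HI (comp_comp HS (comp_u2c (comp_u2c comp_id))) comp_id HN.
apply: (comp_ext H) => x; elim: (N x) => //= k ->; by rewrite !u2_cpair.
Qed.

Lemma comp_case C A B : comp1 C -> comp1 A -> comp1 B ->
  comp1 (fun x => if C x is 0 then A x else B x).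
Proof.
move=> HC HA HB.
have H := comp_primrec HA (comp_comp HB comp_u1) comp_id HC.
apply: (comp_ext H) => x /=; case: (C x) => //= k; by rewrite u1_cpair.
Qed.

Lemma comp_add A B : comp1 A -> comp1 B -> comp1 (fun x => A x + B x).
Proof.
move=> HA HB.
have H := comp_primrec comp_id (comp_comp comp_succ (comp_u2c (comp_u2c comp_id))) HA HB.
apply: (comp_ext H) => x /=; elim: (B x) => [|k IH] /=; first by rewrite addn0.
by rewrite !u2_cpair IH addnS.
Qed.

Lemma comp_mul A B : comp1 A -> comp1 B -> comp1 (fun x => A x * B x).
Proof.
move=> HA HB.
have H := comp_primrec (comp_const 0) (comp_add (comp_u2c (comp_u2c comp_id)) comp_u1) HA HB.
apply: (comp_ext H) => x /=; elim: (B x) => [|k IH] /=; first by rewrite muln0.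
by rewrite !u2_cpair u1_cpair IH mulnS addnC.
Qed.

Lemma comp_pred A : comp1 A -> comp1 (fun x => (A x).-1).
Proof.
move=> HA.
have H := comp_primrec (comp_const 0) (comp_u1c (comp_u2c comp_id)) (comp_const 0) HA.
apply: (comp_ext H) => x /=; case: (A x) => //= k; by rewrite u2_cpair u1_cpair.
Qed.

Lemma comp_sub A B : comp1 A -> comp1 B -> comp1 (fun x => A x - B x).
Proof.
move=> HA HB.
have H := comp_primrec comp_id (comp_pred (comp_u2c (comp_u2c comp_id))) HA HB.
apply: (comp_ext H) => x /=; elim: (B x) => [|k IH] /=; first by rewrite subn0.
by rewrite !u2_cpair IH subnS.
Qed.

Lemma comp_exp2 A : comp1 A -> comp1 (fun x => 2 ^ A x).
Proof.
move=> HA.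
have H := comp_primrec (comp_const 1) (comp_mul (comp_const 2) (comp_u2c (comp_u2c comp_id))) (comp_const 0) HA.
apply: (comp_ext H) => x /=; elim: (A x) => [|k IH] //=.
by rewrite !u2_cpair IH expnS.
Qed.

Definition compb (P : nat -> bool) := comp1 (fun x => nat_of_bool (P x)).

Lemma comp_if P A B : compb P -> comp1 A -> comp1 B ->
  comp1 (fun x => if P x then A x else B x).
Proof.
move=> HP HA HB; apply: (comp_ext (comp_case HP HB HA)) => x; by case: (P x).
Qed.

Lemma compb_ext P Q : compb P -> (forall x, P x = Q x) -> compb Q.
Proof. move=> H E; apply: (comp_ext H) => x; by rewrite E. Qed.

Lemma compb_const b : compb (fun _ => b).
Proof. exact: comp_const. Qed.

Lemma compb_zero A : comp1 A -> compb (fun x => A x == 0).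
Proof.
move=> HA; apply: (comp_ext (comp_case HA (comp_const 1) (comp_const 0))) => x.
by case: (A x).
Qed.

Lemma compb_eq A B : comp1 A -> comp1 B -> compb (fun x => A x == B x).
Proof.
move=> HA HB; apply: compb_ext (compb_zero (comp_add (comp_sub HA HB) (comp_sub HB HA))) _ => x.
apply/idP/idP => /eqP E; apply/eqP; lia.
Qed.

Lemma compb_and P Q : compb P -> compb Q -> compb (fun x => P x && Q x).
Proof.
move=> HP HQ; apply: (comp_ext (comp_if HP HQ (comp_const 0))) => x; by case: (P x).
Qed.
Lemma compb_or P Q : compb P -> compb Q -> compb (fun x => P x || Q x).
Proof.
move=> HP HQ; apply: (comp_ext (comp_if HP (comp_const 1) HQ)) => x; by case: (P x).
Qed.
Lemma compb_neg P : compb P -> compb (fun x => ~~ P x).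
Proof.
move=> HP; apply: (comp_ext (comp_if HP (comp_const 0) (comp_const 1))) => x; by case: (P x).
Qed.

Lemma compb_odd A : comp1 A -> compb (fun x => odd (A x)).
Proof.
move=> HA.
have H := comp_primrec (comp_const 0) (comp_case (comp_u2c (comp_u2c comp_id)) (comp_const 1) (comp_const 0)) (comp_const 0) HA.
apply: (comp_ext H) => x /=; elim: (A x) => [|k IH] //=.
by rewrite !u2_cpair IH; case: (odd k).
Qed.

Lemma comp_half A : comp1 A -> comp1 (fun x => (A x)./2).
Proof.
move=> HA.
have H := comp_primrec (comp_const 0) (comp_add (comp_u2c (comp_u2c comp_id)) (compb_odd (comp_u1c (comp_u2c comp_id)))) (comp_const 0) HA.
apply: (comp_ext H) => x /=; elim: (A x) => [|k IH] //=.
rewrite !u2_cpair u1_cpair IH; rewrite uphalfE -[in RHS](odd_double_half k).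
case: (odd k) => /=; lia.
Qed.

Lemma comp_b A : compb A -> comp1 (fun x => nat_of_bool (A x)).
Proof. by []. Qed.

Fixpoint rrec (ra rb : nat -> option nat) y k :=
  match k with 0 => ra y
  | k'.+1 => obind (fun v => rb (cpair y (cpair k' v))) (rrec ra rb y k') end.

Fixpoint msearch (ra : nat -> option nat) x j :=
  match j with 0 => 0
  | j'.+1 => if msearch ra x j' is 0 then
               match ra (cpair x j') with None => 1 | Some 0 => j'.+2 | Some _ => 0 end
             else msearch ra x j' end.

Definition mres s := if s is n.+2 then Some n else None.

Fixpoint run (f : nat) (c : Defs.code) (x : nat) {struct c} : option nat :=
  match c with
  | CZero => Some 0 | CSucc => Some x.+1 | CId => Some x
  | CPi1 => Some (u1 x) | CPi2 => Some (u2 x)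
  | CPair a b => obind (fun va => omap (fun vb => cpair va vb) (run f b x)) (run f a x)
  | CComp a b => obind (run f a) (run f b x)
  | CRec a b => rrec (run f a) (run f b) (u1 x) (u2 x)
  | CMu a => mres (msearch (run f a) x f)
  end.

Lemma msearch_found ra x j n : msearch ra x j = n.+2 ->
  [/\ n < j, ra (cpair x n) = Some 0 & forall m, m < n -> exists k, ra (cpair x m) = Some k.+1].
Proof.
elim: j => //= j IH.
case E: (msearch ra x j) => [|s].
- have H0 : forall m, m < j -> exists k, ra (cpair x m) = Some k.+1.
    clear IH; elim: j E => // j IH /=.
    case E: (msearch ra x j) => [|s] //.
    case E2: (ra (cpair x j)) => [[|k]|] // _ m; rewrite ltnS leq_eqVlt => /orP [/eqP ->|Hm].
      by exists k.
    exact: IH E m Hm.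
  case E2: (ra (cpair x j)) => [[|k]|] // [<-]; split => //.
- by rewrite -E => /IH [? ? ?]; split => //; apply: ltnW.
Qed.

Lemma msearch_spec ra x n : ra (cpair x n) = Some 0 ->
  (forall m, m < n -> exists k, ra (cpair x m) = Some k.+1) ->
  forall j, msearch ra x j = if j <= n then 0 else n.+2.
Proof.
move=> H0 H1; elim=> //= j ->.
case: (ltngtP j n) => Hj.
  by case: (H1 _ Hj) => k ->.
- by [].
- by subst; rewrite H0.
Qed.

Lemma run_sound f c x m : run f c x = Some m -> Defs.eval c x m.
Proof.
elim: c x m => [||||| a IHa b IHb | a IHa b IHb | a IHa b IHb | a IHa] x m /=.
- by case=> <-; constructor.
- by case=> <-; constructor.
- by case=> <-; constructor.
- by case=> <-; rewrite -{1}(cpair_unpair x); constructor.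
- by case=> <-; rewrite -{1}(cpair_unpair x); constructor.
- case E1: (run f a x) => [va|] //=; case E2: (run f b x) => [vb|] //= [<-].
  by constructor; [exact: IHa E1|exact: IHb E2].
- case E1: (run f b x) => [vb|] //= E2; exact: ev_comp (IHb _ _ E1) (IHa _ _ E2).
- rewrite -{3}(cpair_unpair x); move: (u1 x) (u2 x) => y k.
  elim: k m => [|k IH] m /=; first by move=> H; constructor; exact: IHa H.
  case E: (rrec _ _ y k) => [v|] //= H; econstructor; [exact: IH _ E | exact: IHb _ _ H].
- case E: (msearch _ x f) => [|[|n]] //= [<-].
  case: (msearch_found E) => _ H0 H1; constructor; first exact: IHa.
  by move=> m' /H1 [k Hk]; exists k; apply: IHa.
Qed.

Definition evfuel c x m := exists f0, forall f, f0 <= f -> run f c x = Some m.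

Lemma run_complete c x m : Defs.eval c x m -> evfuel c x m.
Proof.
elim: c x m => [||||| a IHa b IHb | a IHa b IHb | a IHa b IHb | a IHa] x m H.
- by inversion H; exists 0.
- by inversion H; exists 0.
- by inversion H; exists 0.
- by inversion H; subst; exists 0 => f _ /=; rewrite u1_cpair.
- by inversion H; subst; exists 0 => f _ /=; rewrite u2_cpair.
- inversion H; subst.
  have [f1 F1] := IHa _ _ ltac:(eassumption); have [f2 F2] := IHb _ _ ltac:(eassumption).
  exists (maxn f1 f2) => f Hf /=; rewrite F1 ?F2 //; lia.
- inversion H; subst.
  have [f1 F1] := IHb _ _ ltac:(eassumption); have [f2 F2] := IHa _ _ ltac:(eassumption).
  exists (maxn f1 f2) => f Hf /=; rewrite F1; [rewrite /= F2 //; lia | lia].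
- suff: forall y k m, Defs.eval (CRec a b) (cpair y k) m ->
     exists f0, forall f, f0 <= f -> rrec (run f a) (run f b) y k = Some m.
    rewrite -(cpair_unpair x) in H; move=> /(_ _ _ _ H) [f0 Hf]; exists f0 => f /Hf /=.
    done.
  move=> y k; elim: k => [|k IHk] m' H'.
  + inversion H'; subst; cpinj; try congruence.
    by have [f0 Hf] := IHa _ _ ltac:(eassumption); exists f0.
  + inversion H'; subst; cpinj; try congruence.
    repeat match goal with E : _.+1 = _.+1 |- _ => case: E => E; subst end.
    have [f1 F1] := IHk _ ltac:(eassumption); have [f2 F2] := IHb _ _ ltac:(eassumption).
    exists (maxn f1 f2) => f Hf /=; rewrite F1; [rewrite /= F2 //; lia | lia].
- inversion H; subst.
  case: (IHa _ _ H1) => fz Hz.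
  have [fs Hs] : exists fs, forall f, fs <= f -> forall m', m' < m ->
      exists k, run f a (cpair x m') = Some k.+1.
    clear H H1 Hz; elim: m H2 => [|n IHn] H3; first by exists 0.
    case: IHn => [m' Hm'|fs Hs]; first by apply: H3; lia.
    case: (H3 n (ltnSn n)) => k /IHa [f1 H1].
    exists (maxn fs f1) => f Hf m' Hm'.
    case: (ltngtP m' n) => Hmn; first (apply: Hs => //; lia); first lia.
    subst; exists k; apply: H1; lia.
  exists (maxn (maxn fz fs) m.+1) => f Hf /=.
  rewrite (msearch_spec (Hz f _) (Hs f _)); try lia.
  by rewrite ifF //; lia.
Qed.

Definition enc (o : option nat) := if o is Some v then v.+1 else 0.

Definition K c p := enc (run (u2 p) c (u1 p)).

Lemma comp_K c : comp1 (K c).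
Proof.
rewrite /K; elim: c => [||||| a IHa b IHb | a IHa b IHb | a IHa b IHb | a IHa] /=.
- exact: comp_const.
- exact: (comp_comp comp_succ (comp_comp comp_succ comp_u1)).
- exact: (comp_comp comp_succ comp_u1).
- exact: (comp_comp comp_succ (comp_u1c comp_u1)).
- exact: (comp_comp comp_succ (comp_u2c comp_u1)).
- have H : comp1 (fun p => if enc (run (u2 p) a (u1 p)) == 0 then 0 else
     if enc (run (u2 p) b (u1 p)) == 0 then 0 else
     (cpair (enc (run (u2 p) a (u1 p))).-1 (enc (run (u2 p) b (u1 p))).-1).+1).
    apply: comp_if; first exact: compb_zero.
      exact: comp_const.
    apply: comp_if; first exact: compb_zero.
      exact: comp_const.
    exact: (comp_comp comp_succ (comp_pair (comp_pred IHa) (comp_pred IHb))).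
  apply: (comp_ext H) => p.
  by case: (run _ a _) => //= va; case: (run _ b _).
- have H : comp1 (fun p => if enc (run (u2 p) b (u1 p)) == 0 then 0 else
     (fun q => enc (run (u2 q) a (u1 q))) (cpair (enc (run (u2 p) b (u1 p))).-1 (u2 p))).
    apply: comp_if; first exact: compb_zero.
      exact: comp_const.
    exact: (comp_comp IHa (comp_pair (comp_pred IHb) comp_u2)).
  apply: (comp_ext H) => p /=.
  by case: (run _ b _) => //= vb; rewrite u1_cpair u2_cpair.
- pose G r := if u2 (u2 r) == 0 then 0 else
     (fun q => enc (run (u2 q) b (u1 q)))
       (cpair (cpair (u1 (u1 r)) (cpair (u1 (u2 r)) (u2 (u2 r)).-1)) (u2 (u1 r))).
  have HG : comp1 G.
    apply: comp_if; first exact: compb_zero (comp_u2c (comp_u2c comp_id)).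
      exact: comp_const.
    apply: (comp_comp IHb); apply: comp_pair; last exact: comp_u2c (comp_u1c comp_id).
    apply: comp_pair; first exact: comp_u1c (comp_u1c comp_id).
    apply: comp_pair; first exact: comp_u1c (comp_u2c comp_id).
    exact: comp_pred (comp_u2c (comp_u2c comp_id)).
  have H := comp_primrec IHa HG (comp_pair (comp_u1c comp_u1) comp_u2) (comp_u2c comp_u1).
  apply: (comp_ext H) => p /=.
  move: (u1 (u1 p)) (u2 (u1 p)) (u2 p) => y k f.
  elim: k => [|k IH] /=; first by rewrite u1_cpair u2_cpair.
  rewrite {}IH /G !u2_cpair !u1_cpair.
  by case: (rrec _ _ y k) => //= v; rewrite ?u1_cpair ?u2_cpair.
- pose G r := if u2 (u2 r) == 0 then
     (if (fun q => enc (run (u2 q) a (u1 q))) (cpair (cpair (u1 (u1 r)) (u1 (u2 r))) (u2 (u1 r))) == 0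
      then 1 else if (fun q => enc (run (u2 q) a (u1 q))) (cpair (cpair (u1 (u1 r)) (u1 (u2 r))) (u2 (u1 r))) == 1
      then (u1 (u2 r)).+2 else 0)
     else u2 (u2 r).
  have HA : comp1 (fun r => (fun q => enc (run (u2 q) a (u1 q))) (cpair (cpair (u1 (u1 r)) (u1 (u2 r))) (u2 (u1 r)))).
    apply: (comp_comp IHa); apply: comp_pair; last exact: comp_u2c (comp_u1c comp_id).
    apply: comp_pair; first exact: comp_u1c (comp_u1c comp_id).
    exact: comp_u1c (comp_u2c comp_id).
  have HG : comp1 G.
    apply: comp_if; first exact: compb_zero (comp_u2c (comp_u2c comp_id)); last first.
      exact: comp_u2c (comp_u2c comp_id).
    apply: comp_if; first exact: compb_zero HA.
      exact: comp_const.
    apply: comp_if; first exact: compb_eq HA (comp_const 1).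
      exact: comp_comp comp_succ (comp_comp comp_succ (comp_u1c (comp_u2c comp_id))).
    exact: comp_const.
  have H := comp_pred (comp_primrec (comp_const 0) HG (comp_pair comp_u1 comp_u2) comp_u2).
  apply: (comp_ext H) => p /=.
  have -> : forall s, enc (mres s) = s.-1 by case=> [|[|s]].
  congr (_.-1).
  move: (u1 p) (u2 p) => x f.
  suff E : forall j, primrec (fun=> 0) G (cpair x f) j = msearch (run f a) x j by apply: E.
  elim=> // j IH /=.
  rewrite {}IH /G !u2_cpair !u1_cpair.
  case: (msearch _ x j) => //=.
  rewrite u2_cpair; by case: (run f a (cpair x j)) => [[|k]|].
Qed.

Lemma pickle_nil : pickle ([::] : seq bool) = 0. Proof. by []. Qed.
Lemma pickle_cons (b : bool) (s : seq bool) :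
  pickle (b :: s) = if b then (pickle s).*2.+1.*2 else (pickle s).*2.+1.
Proof.
have -> : pickle (b :: s) = 2 ^ (nat_of_bool b) * (pickle s).*2.+1 by [].
by case: b; rewrite ?mul1n // expn1 mul2n.
Qed.

Definition penc a b := 2 ^ a * (2 ^ b).*2.+1.
Lemma penc_code a b : penc a b = CodeSeq.code [:: a; b].
Proof. by rewrite /penc /= muln1. Qed.
Lemma penc_inj a b a' b' : penc a b = penc a' b' -> a = a' /\ b = b'.
Proof.
rewrite !penc_code => /(congr1 CodeSeq.decode); rewrite !CodeSeq.codeK.
by case=> -> ->.
Qed.
Lemma pickle_pair1 (i : nat) (s : seq bool) : pickle (i, s) = penc i (pickle s).
Proof. by rewrite penc_code. Qed.
Lemma pickle_pair2 (s t : seq bool) : pickle (s, t) = penc (pickle s) (pickle t).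
Proof. by rewrite penc_code. Qed.

Lemma comp_penc A B : comp1 A -> comp1 B -> comp1 (fun x => penc (A x) (B x)).
Proof.
move=> HA HB; apply: comp_mul; first exact: comp_exp2.
apply: (comp_comp comp_succ); apply: (comp_ext (comp_mul (comp_const 2) (comp_exp2 HB))).
by move=> x; rewrite mul2n.
Qed.

Definition hdc n := ~~ odd n.
Definition tlc n := if odd n then n./2 else n./2./2.
Definition good n := (n == 0) || odd n || odd n./2.

Lemma tlc_cons (b : bool) (s : seq bool) : tlc (pickle (b :: s)) = pickle s.
Proof.
rewrite pickle_cons /tlc; case: b.
  by rewrite odd_double /=; lia.
by rewrite oddS odd_double /=; lia.
Qed.
Lemma hdc_cons (b : bool) (s : seq bool) : hdc (pickle (b :: s)) = b.
Proof. by rewrite pickle_cons /hdc; case: b => /=; rewrite ?odd_double. Qed.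
Lemma good_cons (b : bool) (s : seq bool) : good (pickle (b :: s)).
Proof.
rewrite pickle_cons /good; case: b => /=; rewrite ?odd_double ?orbT //.
by rewrite doubleK /= odd_double.
Qed.
Lemma pickle_cons_neq0 (b : bool) (s : seq bool) : pickle (b :: s) != 0.
Proof. by rewrite pickle_cons; case: b. Qed.
Lemma size_pickle (s : seq bool) : size s <= pickle s.
Proof. elim: s => // b s IH; rewrite pickle_cons /=; case: b; lia. Qed.
Lemma tlc0 : tlc 0 = 0. Proof. by []. Qed.
Lemma tlc_lt n : n != 0 -> tlc n < n.
Proof.
rewrite /tlc => H; case: ifP => _.
  by rewrite -{2}(odd_double_half n); lia.
rewrite -{2}(odd_double_half n) -{2}(odd_double_half n./2); lia.
Qed.

Definition vstep q := cpair (tlc (u1 q)) (nat_of_bool ((u2 q != 0) && good (u1 q))).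
Lemma vstepE c ok : vstep (cpair c ok) = cpair (tlc c) (nat_of_bool ((ok != 0) && good c)).
Proof. by rewrite /vstep u1_cpair u2_cpair. Qed.
Definition validn n := u2 (iter n vstep (cpair n 1)) != 0.

Lemma iter_vstep0 k : iter k vstep (cpair 0 1) = cpair 0 1.
Proof. by elim: k => //= k ->; rewrite /vstep u1_cpair u2_cpair. Qed.

Lemma validn_pickle (s : seq bool) : validn (pickle s).
Proof.
rewrite /validn; suff: forall k, size s <= k -> u2 (iter k vstep (cpair (pickle s) 1)) != 0.
  by apply; apply: size_pickle.
elim: s => [|b s IH] k Hk; first by rewrite iter_vstep0 u2_cpair.
case: k Hk => // k Hk; rewrite iterSr vstepE tlc_cons good_cons.
exact: IH.
Qed.

Lemma iter_vstep_bad k c : u2 (iter k vstep (cpair c 0)) = 0.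
Proof.
suff: forall c, u2 (iter k vstep (cpair c 0)) = 0 by [].
elim: k => [|k IH] c'; first by rewrite u2_cpair.
by rewrite iterSr vstepE /= IH.
Qed.

Lemma validnP n : validn n -> exists s : seq bool, pickle s = n.
Proof.
rewrite /validn; suff: forall k n, n <= k -> u2 (iter k vstep (cpair n 1)) != 0 ->
   exists s : seq bool, pickle s = n by apply.
elim=> [|k IH] m Hm.
  by move: Hm; rewrite leqn0 => /eqP ->; exists [::].
case: (eqVneq m 0) => [->|Hm0]; first by exists [::].
rewrite iterSr vstepE /=.
case Hg : (good m); last by rewrite iter_vstep_bad.
move=> /IH [|s Hs].
  by have := tlc_lt Hm0; lia.
exists (hdc m :: s); rewrite pickle_cons Hs /hdc /tlc.
move: Hg; rewrite /good (negbTE Hm0) /=.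
have E1 := odd_double_half m; have E2 := odd_double_half m./2.
case Ho : (odd m) => /= Hg; rewrite Ho /= in E1.
  lia.
rewrite Hg /= in E2; lia.
Qed.

Definition pstep q :=
  if u1 q == 0 then q else
  cpair (tlc (u1 q)) (cpair (tlc (u1 (u2 q)))
     (nat_of_bool [&& u2 (u2 q) != 0, u1 (u2 q) != 0 & hdc (u1 q) == hdc (u1 (u2 q))])).
Lemma pstepE a b ok : pstep (cpair a (cpair b ok)) = if a == 0 then cpair a (cpair b ok) else
  cpair (tlc a) (cpair (tlc b) (nat_of_bool [&& ok != 0, b != 0 & hdc a == hdc b])).
Proof. by rewrite /pstep !u1_cpair !u2_cpair !u1_cpair. Qed.
Definition prefc a b := u2 (u2 (iter a pstep (cpair a (cpair b 1)))) != 0.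

Lemma prefc_pickle (s t : seq bool) : prefc (pickle s) (pickle t) = prefix s t.
Proof.
rewrite /prefc.
suff: forall k ok, size s <= k ->
  (u2 (u2 (iter k pstep (cpair (pickle s) (cpair (pickle t) ok)))) != 0) = (ok != 0) && prefix s t.
  by move=> ->; [|apply: size_pickle].
elim: s t => [|b s IH] t k ok Hk.
  have -> : iter k pstep (cpair 0 (cpair (pickle t) ok)) = cpair 0 (cpair (pickle t) ok).
    by elim: k {Hk} => //= k ->; rewrite pstepE.
  by rewrite !u2_cpair prefix0s andbT.
case: k Hk => // k Hk.
rewrite iterSr pstepE (negbTE (pickle_cons_neq0 _ _)) tlc_cons.
case: t => [|c t].
  rewrite pickle_nil tlc0 /= andbF.
  by rewrite -pickle_nil IH //= andbF.
rewrite tlc_cons IH // hdc_cons hdc_cons (negbTE (pickle_cons_neq0 _ _)) /=.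
by case: (ok != 0); case: (b == c).
Qed.

Lemma comp_tlc A : comp1 A -> comp1 (fun x => tlc (A x)).
Proof. move=> HA; apply: comp_if; [exact: compb_odd|exact: comp_half|exact: comp_half (comp_half HA)]. Qed.
Lemma compb_hdc A : comp1 A -> compb (fun x => hdc (A x)).
Proof. by move=> HA; apply: compb_neg; apply: compb_odd. Qed.
Lemma compb_good A : comp1 A -> compb (fun x => good (A x)).
Proof.
move=> HA; apply: compb_or; first apply: compb_or.
- exact: compb_zero. - exact: compb_odd. - exact: compb_odd (comp_half HA).
Qed.
Lemma compb_neq0 A : comp1 A -> compb (fun x => A x != 0).
Proof. by move=> HA; apply: compb_neg; apply: compb_zero. Qed.

Lemma compb_eqb P Q : compb P -> compb Q -> compb (fun x => P x == Q x).
Proof.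
move=> HP HQ; apply: (compb_ext (compb_eq HP HQ)) => x.
by case: (P x); case: (Q x).
Qed.

Lemma compb_validn A : comp1 A -> compb (fun x => validn (A x)).
Proof.
move=> HA; apply: compb_neq0; apply: comp_u2c; apply: comp_iter => //.
  apply: comp_pair; first exact: comp_tlc comp_u1.
  apply: compb_and; first exact: compb_neq0 comp_u2.
  exact: compb_good comp_u1.
exact: comp_pair HA (comp_const 1).
Qed.

Lemma compb_prefc A B : comp1 A -> comp1 B -> compb (fun x => prefc (A x) (B x)).
Proof.
move=> HA HB; apply: compb_neq0; apply: comp_u2c; apply: comp_u2c; apply: comp_iter => //.
  apply: comp_if; first exact: compb_zero comp_u1.
    exact: comp_id.
  apply: comp_pair; first exact: comp_tlc comp_u1.
  apply: comp_pair; first exact: comp_tlc (comp_u1c comp_u2).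
  apply: compb_and; first exact: compb_neq0 (comp_u2c comp_u2).
  apply: compb_and; first exact: compb_neq0 (comp_u1c comp_u2).
  apply: compb_eqb; first exact: compb_hdc comp_u1.
  exact: compb_hdc (comp_u1c comp_u2).
exact: comp_pair HA (comp_pair HB (comp_const 1)).
Qed.

Lemma ce_search (T : countType) (A : set T) (D : nat -> nat -> bool) :
  compb (fun n => D (u1 n) (u2 n)) ->
  (forall x, A x <-> exists w, D (pickle x) w) -> ce A.
Proof.
move=> /compb_neg [c Hc] HA; exists (CMu c) => x; split.
- move=> /HA Hex.
  have Hex' : exists w, (fun w => D (pickle x) w) w by [].
  case: (ex_minnP Hex') => w Hw Hmin.
  exists w; constructor.
    by have := Hc (cpair (pickle x) w); rewrite u1_cpair u2_cpair Hw.
  move=> m Hm; exists 0; have := Hc (cpair (pickle x) m); rewrite u1_cpair u2_cpair.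
  case E: (D (pickle x) m) => //; have := Hmin _ E; lia.
- case=> m Hm; inversion Hm; subst.
  match goal with H : Defs.eval c (cpair _ _) 0 |- _ =>
    have := eval_det H (Hc _) end.
  rewrite u1_cpair u2_cpair => E; apply/HA; exists m.
  by case: (D (pickle x) m) E.
Qed.

Lemma ce_clock1 c n : (exists m, Defs.eval c n m) ->
  exists f0, forall f, f0 <= f -> K c (cpair n f) != 0.
Proof.
move=> [m /run_complete [f0 Hf]]; exists f0 => f Hf0.
by rewrite /K u1_cpair u2_cpair Hf.
Qed.
Lemma ce_clock2 c n f : K c (cpair n f) != 0 -> exists m, Defs.eval c n m.
Proof.
rewrite /K u1_cpair u2_cpair.
case E: (run f c n) => [m|] // _; exists m; exact: run_sound E.
Qed.

Ltac cps := repeat (rewrite u1_cpair || rewrite u2_cpair).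

Definition Dv cW cP n w :=
 [&& n == penc (u1 w) (u1 (u2 w)), validn (u1 (u2 (u2 w))), validn (u1 (u2 (u2 (u2 w)))),
     K cW (cpair (penc (u1 w) (u1 (u2 (u2 w)))) (u2 (u2 (u2 (u2 w))))) != 0 &
     (u1 (u2 (u2 w)) == 0) ||
     ((K cP (cpair (penc (u1 (u2 w)) (u1 (u2 (u2 (u2 w))))) (u2 (u2 (u2 (u2 w))))) != 0)
       && prefc (u1 (u2 (u2 w))) (u1 (u2 (u2 (u2 w)))))].

Lemma compb_Dv cW cP : compb (fun n => Dv cW cP (u1 n) (u2 n)).
Proof.
rewrite /Dv.
have P1 : comp1 (fun n => u1 (u2 n)) by exact: comp_u1c comp_u2.
have P2 : comp1 (fun n => u1 (u2 (u2 n))) by exact: comp_u1c (comp_u2c comp_u2).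
have P3 : comp1 (fun n => u1 (u2 (u2 (u2 n)))) by exact: comp_u1c (comp_u2c (comp_u2c comp_u2)).
have P4 : comp1 (fun n => u1 (u2 (u2 (u2 (u2 n))))) by exact: comp_u1c (comp_u2c (comp_u2c (comp_u2c comp_u2))).
have P5 : comp1 (fun n => u2 (u2 (u2 (u2 (u2 n))))) by exact: comp_u2c (comp_u2c (comp_u2c (comp_u2c comp_u2))).
apply: compb_and; first by apply: compb_eq; [exact: comp_u1 | exact: comp_penc].
apply: compb_and; first exact: compb_validn.
apply: compb_and; first exact: compb_validn.
apply: compb_and.
  apply: compb_neq0; apply: (comp_comp (comp_K cW)); apply: comp_pair => //.
  exact: comp_penc.
apply: compb_or; first exact: compb_zero.
apply: compb_and; last exact: compb_prefc.
apply: compb_neq0; apply: (comp_comp (comp_K cP)); apply: comp_pair => //.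
exact: comp_penc.
Qed.

Definition Vset (W : nat -> set str) (Phi : set (str * str)) (i : nat) (s : str) :=
  exists t, W i t /\ (t = [::] \/ exists t', Phi (s, t') /\ prefix t t').

Lemma V_ce W Phi : unif_ce W -> ce Phi -> unif_ce (Vset W Phi).
Proof.
move=> [cW HW] [cP HP].
apply: (ce_search (compb_Dv cW cP)) => [[i s]] /=.
rewrite pickle_pair1; split.
- move=> [t [Wt Ht]].
  have [fW HfW] : exists f0, forall f, f0 <= f -> K cW (cpair (penc i (pickle t)) f) != 0.
    by apply/ce_clock1; rewrite -pickle_pair1; apply/(HW (i, t)).
  case: Ht => [Et|[t' [Pt' Hpre]]].
  + subst t; exists (cpair i (cpair (pickle s) (cpair 0 (cpair 0 fW)))).
    rewrite /Dv; cps; rewrite eqxx /=.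
    by rewrite andbT; apply: HfW.
  + have [fP HfP] : exists f0, forall f, f0 <= f -> K cP (cpair (penc (pickle s) (pickle t')) f) != 0.
      by apply/ce_clock1; rewrite -pickle_pair2; apply/(HP (s, t')).
    exists (cpair i (cpair (pickle s) (cpair (pickle t) (cpair (pickle t') (maxn fW fP))))).
    rewrite /Dv; cps; rewrite eqxx /=.
    rewrite !validn_pickle HfW ?HfP ?prefc_pickle ?Hpre ?orbT //; lia.
- move=> [w]; rewrite /Dv.
  move: (u1 w) (u1 (u2 w)) (u1 (u2 (u2 w))) (u1 (u2 (u2 (u2 w)))) (u2 (u2 (u2 (u2 w)))) => i' sc tc tc' f.
  case/and5P => /eqP /penc_inj [<- <-] /validnP [t <-] /validnP [t' <-] HW' Hor.
  exists t; split.
    by apply/(HW (i, t)); rewrite pickle_pair1; apply: ce_clock2 HW'.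
  case/orP: Hor => [/eqP Et|/andP [HP' Hpre]].
    by left; apply: (pcan_inj pickleK); rewrite Et.
  right; exists t'; split; last by rewrite -prefc_pickle.
  by apply/(HP (s, t')); rewrite pickle_pair2; apply: ce_clock2 HP'.
Qed.

Import Order.TTheory GRing.Theory Num.Theory.
Import numFieldTopology.Exports numFieldNormedType.Exports.
Local Open Scope classical_set_scope.
Local Open Scope ring_scope.
Local Open Scope ereal_scope.

Section Meas.
Variable R : realType.

Definition wt (s : str) : \bar R := ((2%:R : R) ^- size s)%:E.

Lemma wt_ge0 s : 0 <= wt s.
Proof. by rewrite lee_fin invr_ge0 exprn_ge0. Qed.

Lemma lambda_ge0 A : 0 <= lambda R A.
Proof.
apply: le_ereal_inf_tmp => _ [S _ <-]; apply: esum_ge0 => s _; exact: wt_ge0.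
Qed.

Lemma lambda_cover A S : A `<=` cylS S -> lambda R A <= esum S wt.
Proof. by move=> HS; apply: ereal_inf_lbound; exists S. Qed.

Lemma lambda_le1 A : lambda R A <= 1.
Proof.
have -> : (1 : \bar R) = esum [set [::]] wt by rewrite esum_set1 ?wt_ge0 // /wt /= expr0 invr1.
apply: lambda_cover => X _; by exists [::].
Qed.

Lemma lambda_fin A : lambda R A \is a fin_num.
Proof.
rewrite fin_numElt; apply/andP; split.
  by apply: (lt_le_trans _ (lambda_ge0 A)); rewrite ltNye.
by apply: (le_lt_trans (lambda_le1 A)); rewrite ltey.
Qed.

Lemma lambda_approx A (e : R) : (0 < e)%R ->
  exists S, A `<=` cylS S /\ esum S wt <= lambda R A + e%:E.
Proof.
move=> e0; case: (lb_ereal_inf_adherent e0 (lambda_fin A)) => _ [S HS <-] H.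
by exists S; split => //; apply: ltW.
Qed.

Lemma esum_subset (T : choiceType) (A B : set T) (a : T -> \bar R) :
  A `<=` B -> (forall x, 0 <= a x) -> esum A a <= esum B a.
Proof.
move=> AB a0; rewrite (esum_mkcond A) (esum_mkcond B); apply: le_esum => x _.
case: ifP => xA; first by rewrite ifT // inE; apply: AB; rewrite inE in xA.
by case: ifP.
Qed.

Lemma esum_bigcup_le (S : set str) (C : str -> set str) :
  esum (\bigcup_(t in S) C t) wt <= esum S (fun t => esum (C t) wt).
Proof.
have : forall x, exists t, (\bigcup_(t in S) C t) x -> S t /\ C t x.
  move=> x; case: (pselect ((\bigcup_(t in S) C t) x)) => [[t St Ct]|nx].
    by exists t.
  by exists [::].
case/choice => tf Htf.
rewrite esum_esum; last by move=> *; exact: wt_ge0.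
pose e x := (tf x, x).
have einj : set_inj (\bigcup_(t in S) C t) e by move=> x y _ _ [].
rewrite -(esum_image _ e (fun k => wt k.2) einj).
apply: esum_subset; last by move=> ?; exact: wt_ge0.
move=> _ [x Hx <-]; rewrite /e; case: (Htf x Hx) => ? ?; by split.
Qed.

Definition gw (e : R) (n : nat) : \bar R := (e / (2 ^ n.+1)%:R)%:E.

Lemma gw_ge0 e n : (0 <= e)%R -> 0 <= gw e n.
Proof. by move=> e0; rewrite lee_fin divr_ge0. Qed.

Lemma esum_gw (S : set str) e : (0 <= e)%R -> esum S (fun t => gw e (pickle t)) <= e%:E.
Proof.
move=> e0.
have pinj : set_inj S (@pickle str) by move=> x y _ _; apply: (pcan_inj pickleK).
rewrite -(esum_image _ _ (gw e) pinj).
apply: (le_trans (esum_subset (B := setT) _ _)) => //; first by move=> ?; exact: gw_ge0.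
rewrite -nneseries_esumT; last by move=> ?; exact: gw_ge0.
have := epsilon_trick0 xpredT e0; by [].
Qed.

Lemma lambda_subadd (S : set str) (A : str -> set cantor) (B : set cantor) :
  B `<=` \bigcup_(t in S) A t -> lambda R B <= esum S (fun t => lambda R (A t)).
Proof.
move=> HB; apply/lee_addgt0Pr => e e0.
have : forall t, exists C, A t `<=` cylS C /\ esum C wt <= lambda R (A t) + gw e (pickle t).
  move=> t; apply: lambda_approx; apply: divr_gt0 => //; rewrite ltr0n expn_gt0.
case/choice => C HC.
apply: (le_trans (lambda_cover (S := \bigcup_(t in S) C t) _)).
  move=> X /HB [t St Xt]; case: (HC t) => /(_ X Xt) [s Cs Hs] _.
  by exists s => //; exists t.
apply: (le_trans (esum_bigcup_le S C)).
apply: (le_trans (le_esum (b := fun t => lambda R (A t) + gw e (pickle t)) _)).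
  by move=> t _; case: (HC t).
rewrite esumD; last by move=> t _; apply: gw_ge0; apply: ltW.
  by rewrite leeD2l //; apply: esum_gw; apply: ltW.
by move=> t _; apply: lambda_ge0.
Qed.

End Meas.

Theorem theorem5p9 (R : realType) (rho : seq bool -> R)
  (Phi : set (seq bool * seq bool)) :
  semi_measure rho -> left_ce rho ->
  turing_functional Phi ->
  (forall s, lambda_Phi R Phi s = (rho s)%:E) ->
  forall X : nat -> bool, W2R R X -> in_dom Phi X ->
  forall Y : nat -> bool, Phi_val Phi X Y -> W2R_rho rho Y.
Proof.
move=> Hsm Hlce [HPce Hcompat] Hlam X HX Hdom Y HY W HWce Hcvg HYall.
apply: (HX (fun i => cylS (Vset W Phi i))).
- by exists (Vset W Phi); split => //; apply: V_ce.
- apply: (@squeeze_cvge _ _ _ _ (fun=> 0) _ (fun i => rho_set rho (W i))); last 2 first.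
  + exact: cvg_cst.
  + exact: Hcvg.
  apply: nearW => i; apply/andP; split; first exact: lambda_ge0.
  rewrite /rho_set.
  have -> : esum (W i) (fun s => (rho s)%:E) = esum (W i) (fun t => lambda R [set X | outpref Phi X t]).
    by apply: eq_esum => t _; rewrite -Hlam.
  apply: lambda_subadd => X' [s [t [Wt Ht]] Hs].
  exists t => //; case: Ht => [->|[t' [Pt' Hpre]]]; first by left.
  by right; exists s, t'; split.
- move=> i; case: (HYall i) => t Wt Hpt.
  case: (HY t Hpt) => [Et|[s [t' [Ps Hs Hpre]]]].
    exists [::]; last by [].
    by exists t; split => //; left.
  by exists s => //; exists t; split => //; right; exists t'; split.
Qed.
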